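(* Let $q$ be an even positive integer and $h_q(x_1,\dots,x_d):=\sum_{\mathbf{k}\in\mathbb{Z}_{\ge0}^d,\ \|\mathbf{k}\|_1=q}x_1^{k_1}\cdots x_d^{k_d}$ the complete homogeneous symmetric polynomial of degree $q$ in $d$ variables. In each of the cases (a) $q=2$, (b) $d=2$, (c) $d=3$ and $q=4$, we have for all $(x_1,\dots,x_d)\in\mathbb{R}^d$ $$h_q(x_1,\dots,x_d)\ge\frac12\sum_{j=1}^d x_j^q.$$ *)

(* Defs.v *)
From mathcomp Require Import all_boot all_order all_algebra.
From mathcomp Require Import reals.
Set Implicit Arguments. Unset Strict Implicit. Unset Printing Implicit Defensive.
Import Order.TTheory GRing.Theory Num.Theory.
Local Open Scope ring_scope.

(* Multi-indices k in Z_{>=0}^d with |k|_1 = q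
   are enumerated as finite functions 'I_d -> 'I_q.+1 (each k_j <= q). *)
Definition hq (R : ringType) (d q : nat) (x : 'I_d -> R) : R :=
  \sum_(k : {ffun 'I_d -> 'I_q.+1} | (\sum_(j < d) (k j : nat))%N == q)
     \prod_(j < d) x j ^+ (k j : nat).

(* Main.v *)
Require Import Defs.
From mathcomp Require Import all_boot all_order all_algebra.
From mathcomp Require Import reals ring lra.
Import Order.TTheory GRing.Theory Num.Theory.
Local Open Scope ring_scope.

Section G.
Variable R : realType.

Definition g (d B n : nat) (x : 'I_d -> R) : R :=
  \sum_(k : {ffun 'I_d -> 'I_B} | (\sum_(j < d) (k j : nat))%N == n)
     \prod_(j < d) x j ^+ (k j : nat).

Definition consf d B (p : 'I_B * {ffun 'I_d -> 'I_B}) : {ffun 'I_d.+1 -> 'I_B} :=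
  [ffun j => if unlift ord0 j is Some j' then p.2 j' else p.1].

Definition unconsf d B (k : {ffun 'I_d.+1 -> 'I_B}) : 'I_B * {ffun 'I_d -> 'I_B} :=
  (k ord0, [ffun j => k (lift ord0 j)]).

Lemma consf0 d B p : @consf d B p ord0 = p.1.
Proof. by rewrite ffunE unlift_none. Qed.

Lemma consfS d B p j : @consf d B p (lift ord0 j) = p.2 j.
Proof. by rewrite /consf ffunE liftK. Qed.

Lemma consf_bij d B : bijective (@consf d B).
Proof.
exists (@unconsf d B).
  by case=> a f; rewrite /unconsf consf0; congr pair; apply/ffunP=> j; rewrite ffunE consfS.
move=> k; apply/ffunP=> j; rewrite ffunE.
case: unliftP => [j'|] -> /=; by rewrite ?ffunE.
Qed.

Lemma g_rec d B n x :
  g d.+1 B n x = \sum_(i < B | (i <= n)%N) x ord0 ^+ i * g d B (n - i) (fun j => x (lift ord0 j)).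
Proof.
unfold g; rewrite (reindex (@consf d B)); last by apply: onW_bij; apply: consf_bij.
symmetry.
under [LHS]eq_bigr do rewrite mulr_sumr.
rewrite pair_big_dep /=.
apply: eq_big.
  case=> a f /=; rewrite big_ord_recl consf0.
  rewrite [in RHS](eq_bigr (fun i => nat_of_ord (f i))); last by move=> i _; rewrite /consf ffunE /= liftK.
  apply/idP/idP => [/andP[H /eqP ->]|/eqP <-].
    by rewrite subnKC.
  by rewrite leq_addr addKn eqxx.
case=> a f /= _; rewrite big_ord_recl consf0; congr (_ * _).
by apply: eq_bigr => j _; rewrite /consf ffunE liftK.
Qed.

Lemma sum_low B n (F : nat -> R) : (n < B)%N ->
  \sum_(i < B | (i <= n)%N) F i = \sum_(i < n.+1) F i.
Proof.
move=> HnB; rewrite (big_ord_widen_cond B (fun _ => true) F HnB).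
by apply: eq_bigl => i.
Qed.

Lemma g0 B n (x : 'I_0 -> R) : (0 < B)%N -> g 0 B n x = (n == 0%N)%:R.
Proof.
move=> HB; rewrite /g.
under eq_bigl do rewrite big_ord0.
under eq_bigr do rewrite big_ord0.
case: n => [|n] /=.
  by rewrite sumr_const card_ffun (card_ord 0) expn0.
by rewrite big_mkcond big1.
Qed.

Lemma g1 B m (y : 'I_1 -> R) : (m < B)%N -> g 1 B m y = y ord0 ^+ m.
Proof.
move=> HmB; rewrite g_rec (@sum_low B m (fun i => y ord0 ^+ i * g 0 B (m - i) (fun j => y (lift ord0 j)))) //.
rewrite big_ord_recr /= subnn g0 ?(leq_ltn_trans _ HmB) // mulr1 big1 ?add0r //.
move=> i _; rewrite g0 ?(leq_ltn_trans _ HmB) //=.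
by rewrite subn_eq0 leqNgt ltn_ord /= mulr0.
Qed.

Definition H (u v : R) q := \sum_(i < q.+1) u ^+ i * v ^+ (q - i).

Lemma Hrec u v q : H u v q.+1 = v ^+ q.+1 + u * H u v q.
Proof.
rewrite /H big_ord_recl /= expr0 mul1r subn0; congr (_ + _).
rewrite mulr_sumr; apply: eq_bigr => i _.
by rewrite /bump add1n subSS exprS mulrA.
Qed.

Lemma g2 B n (y : 'I_2 -> R) : (n < B)%N ->
  g 2 B n y = H (y ord0) (y (lift ord0 ord0)) n.
Proof.
move=> HnB; rewrite g_rec (@sum_low B n (fun i => y ord0 ^+ i * g 1 B (n - i) (fun j => y (lift ord0 j)))) //.
apply: eq_bigr => i _; rewrite g1 //.
by apply: leq_ltn_trans HnB; apply: leq_subr.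
Qed.

Lemma gd0 d B (x : 'I_d -> R) : (0 < B)%N -> g d B 0 x = 1.
Proof.
move=> HB; elim: d x => [|d IH] x; first by rewrite g0.
rewrite g_rec (@sum_low B 0 (fun i => x ord0 ^+ i * g d B (0 - i) (fun j => x (lift ord0 j)))) //.
by rewrite big_ord_recl big_ord0 expr0 mul1r addr0 IH.
Qed.

Lemma gd1 d B (x : 'I_d -> R) : (1 < B)%N -> g d B 1 x = \sum_(j < d) x j.
Proof.
move=> HB; elim: d x => [|d IH] x.
  rewrite g0 ?big_ord0 //; exact: ltnW.
rewrite g_rec (@sum_low B 1 (fun i => x ord0 ^+ i * g d B (1 - i) (fun j => x (lift ord0 j)))) //.
rewrite !big_ord_recl big_ord0 expr0 mul1r addr0 IH expr1 (@gd0 d B); last exact: ltnW.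
by rewrite mulr1 addrC.
Qed.
Lemma gd2 d (x : 'I_d -> R) :
  2 * g d 3 2 x = \sum_(j < d) x j ^+ 2 + (\sum_(j < d) x j) ^+ 2.
Proof.
elim: d x => [|d IH] x.
  by rewrite g0 // !big_ord0 mulr0 expr0n addr0.
rewrite g_rec (@sum_low 3 2 (fun i => x ord0 ^+ i * g d 3 (2 - i) (fun j => x (lift ord0 j)))) //.
rewrite !big_ord_recl big_ord0 expr0 mul1r addr0 (@gd1 d 3) // (@gd0 d 3) // expr1 mulr1.
have IH' := IH (fun j => x (lift ord0 j)).
set s := \sum_(i < d) x (lift ord0 i) in IH' *.
set S := \sum_(i < d) x (lift ord0 i) ^+ 2 in IH' *.
set G := g d 3 2 _ in IH' *.
set y := x ord0.
rewrite -[y ^+ lift _ _]/(y ^+ 2) mulrDr IH'; ring.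
Qed.
Lemma H0 (u v : R) : H u v 0 = 1.
Proof. by rewrite /H big_ord1 !expr0 mulr1. Qed.

Lemma key2 m (a b : R) :
  2 * H a b (m.*2.+2) - a ^+ (m.*2.+2) - b ^+ (m.*2.+2) = (a + b) ^+ 2 * H (a ^+ 2) (b ^+ 2) m.
Proof.
elim: m => [|m IH].
  rewrite [H a b _]Hrec [H a b _]Hrec !H0; ring.
rewrite doubleS (Hrec a b m.*2.+3) (Hrec a b m.*2.+2) (Hrec (a ^+ 2)).
set c := b ^+ m.*2.+2.
have Hc1 : b ^+ m.*2.+4 = b ^+ 2 * c by rewrite /c -exprD.
have Hc2 : b ^+ m.*2.+3 = b * c by rewrite /c -exprS.
have Hc3 : (b ^+ 2) ^+ m.+1 = c by rewrite /c -exprM mul2n doubleS.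
have Ha : a ^+ m.*2.+4 = a ^+ 2 * a ^+ m.*2.+2 by rewrite -exprD.
rewrite Hc1 Hc2 Hc3 Ha.
have -> : (a + b) ^+ 2 * (c + a ^+ 2 * H (a ^+ 2) (b ^+ 2) m) =
  (a + b) ^+ 2 * c + a ^+ 2 * ((a + b) ^+ 2 * H (a ^+ 2) (b ^+ 2) m) by ring.
rewrite -IH /c; ring.
Qed.

Lemma H_ge0 (a b : R) m : 0 <= H (a ^+ 2) (b ^+ 2) m.
Proof.
rewrite /H; apply: sumr_ge0 => i _.
by apply: mulr_ge0; apply: exprn_ge0; apply: sqr_ge0.
Qed.

Lemma ord0E n : nat_of_ord (@ord0 n) = 0%N. Proof. by []. Qed.

Lemma case3 (x : 'I_3 -> R) :
  2 * g 3 5 4 x - \sum_(j < 3) x j ^+ 4 =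
  (\sum_(j < 3) x j) ^+ 2 * \sum_(j < 3) x j ^+ 2.
Proof.
rewrite g_rec (@sum_low 5 4 (fun i => x ord0 ^+ i * g 2 5 (4 - i) (fun j => x (lift ord0 j)))) //.
rewrite !big_ord_recl !big_ord0.
rewrite !g2 // ?ltn_subrL //.
set a := x ord0; set b := x (lift ord0 ord0); set c := x (lift ord0 (lift ord0 ord0)).
rewrite !lift0 !ord0E !subSS !subn0 !Hrec !H0.
rewrite /a /b /c.
ring.
Qed.

End G.

Theorem proposition3 (R : realType) (d q : nat) :
  (0 < q)%N -> ~~ odd q ->
  (q = 2%N \/ d = 2%N \/ (d = 3%N /\ q = 4%N)) ->
  forall x : 'I_d -> R,
    hq q x >= 2^-1 * \sum_(j < d) x j ^+ q.
Proof.
move=> Hq Hodd [->|[->|[-> ->]]] x.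
- have -> : hq 2 x = g _ d 3 2 x by [].
  have E := @gd2 R d x.
  have P := sqr_ge0 (\sum_(j < d) x j).
  lra.
- have -> : hq q x = g _ 2 q.+1 q x by [].
  rewrite g2 //.
  move: Hq Hodd; case: q => [|[|q]] // _ Hodd.
  move: Hodd => /= ; rewrite negbK => Hodd.
  have Eq : q = (q./2).*2 by rewrite halfK (negbTE Hodd) subn0.
  rewrite Eq.
  rewrite !big_ord_recl big_ord0.
  have K := @key2 R (q./2) (x ord0) (x (lift ord0 ord0)).
  have P : 0 <= (x ord0 + x (lift ord0 ord0)) ^+ 2 * @H R (x ord0 ^+ 2) (x (lift ord0 ord0) ^+ 2) q./2.
    by apply: mulr_ge0; [apply: sqr_ge0 | apply: H_ge0].
  lra.
- have -> : hq 4 x = g _ 3 5 4 x by [].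
  have E := @case3 R x.
  have P : 0 <= (\sum_(j < 3) x j) ^+ 2 * \sum_(j < 3) x j ^+ 2.
    by apply: mulr_ge0; [apply: sqr_ge0 | apply: sumr_ge0 => j _; apply: sqr_ge0].
  lra.
Qed.
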